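(* Let $\ell\ge2$ and let $G$ be an $N$-AW graph. Then every vertex of degree $d\ge 2$ in $\overline{G}$ has at least $d-1$ neighbors (in $\overline{G}$) of degree at least $2$ in $\overline{G}$.
   Context: All graphs are finite and simple; $\overline{G}$ is the complement. Labels lie in $\mathbb{Z}_\ell$. In the neighborhood Lights Out game, toggling a vertex $w$ adds $1$ (mod $\ell$) to the label of each vertex of the closed neighborhood $N[w]$; the game is won when all labels are $0$; a graph is $N$-AW if every initial labeling can be won. *)

(* Defs.v *)
From mathcomp Require Import all_boot all_order all_algebra.
Set Implicit Arguments. Unset Strict Implicit. Unset Printing Implicit Defensive.
Import GRing.Theory.
Local Open Scope ring_scope.

Definition simple_graph (T : finType) (e : rel T) : Prop :=
  symmetric e /\ irreflexive e.

Definition closed_nbhd (T : finType) (e : rel T) (w : T) : {set T} :=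
  [set v | (v == w) || e w v].

Definition toggle_seq (T : finType) (e : rel T) (l : nat)
  (lab : T -> 'Z_l) (s : seq T) : T -> 'Z_l :=
  foldl (fun f w => fun v => f v + (if v \in closed_nbhd e w then 1 else 0)) lab s.

(* Neighborhood Lights Out over Z_l: G is N-AW (always winnable). *)
Definition N_AW (T : finType) (e : rel T) (l : nat) : Prop :=
  forall lab : T -> 'Z_l, exists s : seq T, forall v, toggle_seq e lab s v = 0.

Definition compl_rel (T : finType) (e : rel T) : rel T :=
  fun x y => (x != y) && ~~ e x y.

Definition deg (T : finType) (e : rel T) (x : T) : nat := #|[set y | e x y]|.

(* Main.v *)
Require Import Defs.
From mathcomp Require Import all_boot all_order all_algebra.
Import GRing.Theory.

Lemma toggle_inv (l : nat) (T : finType) (e : rel T) (u w : T) :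
  (forall x, (u \in closed_nbhd e x) = (w \in closed_nbhd e x)) ->
  forall s lab, (toggle_seq e lab s u - toggle_seq e lab s w = lab u - lab w :> 'Z_l)%R.
Proof.
move=> H; elim=> [|x s IH] lab //=.
rewrite /toggle_seq /= -/(toggle_seq _ _ _) IH H.
by rewrite opprD addrACA subrr addr0.
Qed.

Theorem lemma4p13 (l : nat) (T : finType) (e : rel T) :
  (2 <= l)%N -> simple_graph e -> N_AW e l ->
  forall v : T, (2 <= deg (compl_rel e) v)%N ->
    (deg (compl_rel e) v - 1 <=
       #|[set u | compl_rel e v u & (2 <= deg (compl_rel e) u)%N]|)%N.
Proof.
move=> _ [esy eirr] HAW v _.
set S := [set u | _ & _].
set Nv := [set y | compl_rel e v y].
have csym : forall x y, compl_rel e x y = compl_rel e y x.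
  by move=> x y; rewrite /compl_rel eq_sym esy.
have leaf : forall u, u \in Nv :\: S -> forall x, (u \in closed_nbhd e x) = (x != v).
  move=> u; rewrite !inE => /andP [Hn Hv].
  rewrite Hv /= -leqNgt in Hn.
  have Hvu : compl_rel e u v by rewrite csym.
  have Hy : forall y, compl_rel e u y -> y = v.
    move=> y Hy; apply/eqP; apply/negPn/negP => Hyv.
    have : (1 < deg (compl_rel e) u)%N.
      apply/card_gt1P; exists y, v; by rewrite !inE Hy Hvu.
    by rewrite ltnNge Hn.
  move=> x; rewrite inE esy.
  have -> : ((u == x) || e u x) = ~~ compl_rel e u x.
    by rewrite /compl_rel negb_and !negbK.
  apply/idP/idP.
  - move=> H0; apply/eqP => Hxv; move: H0; rewrite Hxv Hvu. by [].
  - move=> Hxv; apply/negP => /Hy Hxv2; by rewrite Hxv2 eqxx in Hxv.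
have H1 : (#|Nv :\: S| <= 1)%N.
  rewrite leqNgt; apply/negP => /card_gt1P [u [w [Hu Hw Huw]]].
  have Hx : forall x, (u \in closed_nbhd e x) = (w \in closed_nbhd e x).
    by move=> x; rewrite (leaf u Hu) (leaf w Hw).
  have [s Hs] := HAW (fun y => if y == u then 1%R else 0%R).
  have := @toggle_inv l _ _ _ _ Hx s (fun y => if y == u then 1%R else 0%R).
  have Hwu : w != u by rewrite eq_sym.
  rewrite !Hs eqxx (negbTE Hwu).
  by rewrite subrr subr0 => /esym/eqP; rewrite oner_eq0.
have HS : S \subset Nv by apply/subsetP => x; rewrite !inE => /andP [].
have := cardsID S Nv.
rewrite /deg -/Nv (setIidPr HS) => <-.
move: H1; set a := #|Nv :\: S|; set b := #|S|.
by rewrite leq_subLR addnC -(leq_add2r b).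
Qed.
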